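(* Let $\mathbf{F}_{25} = \mathbf{F}_5(\omega)$ with $\omega^2 = 2$, and let $\ell$ be an odd prime with $\ell \neq 5$. Define $\alpha, \beta \colon \mathbf{F}_{25}^{\boxtimes} \to \mathbf{Z}/\ell$ by $\alpha(1) = \alpha(3) = \alpha(\omega+1) = 1$, $\alpha(3\omega+3) = \alpha(4\omega+1) = \alpha(2\omega+3) = 0$, $\beta(1) = \beta(3) = \beta(3\omega+3) = 0$, $\beta(\omega+1) = \beta(4\omega+1) = \beta(2\omega+3) = 1$, and extended to the remaining six nonzero squares by $\alpha(-s) = -\alpha(s)$, $\beta(-s) = -\beta(s)$. Then $\alpha, \beta$ are voltage assignments, the covers $X^\alpha$ and $X^\beta$ of the Paley graph $X(\mathbf{F}_{25})$ have the same adjacency spectrum (as multisets), and $X^\alpha$ and $X^\beta$ are not isomorphic as graphs.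
   Context: $\mathbf{F}_{25}^{\boxtimes}$ is the set of nonzero squares in $\mathbf{F}_{25}$; it is the union of the $\mathbf{F}_5^\times$-orbits of $1$, $\omega+1$ and $4\omega+1$, and the listed six elements together with their negatives are exactly these $12$ squares. For a prime $\ell \neq 5$, a voltage assignment is a function $\alpha \colon \mathbf{F}_{25}^{\boxtimes} \to \mathbf{Z}/\ell$, not identically zero, with $\alpha(-s) = -\alpha(s)$. The graph $X^\alpha$ has vertex set $\mathbf{F}_{25} \times \mathbf{Z}/\ell$, with $(x,i)$ adjacent to $(y,j)$ iff $y - x \in \mathbf{F}_{25}^{\boxtimes}$ and $j - i = \alpha(y - x)$. Its adjacency spectrum is the multiset of eigenvalues of its adjacency matrix. *)

(* Defs.v *)
From HB Require Import structures.
From mathcomp Require Import all_boot all_order all_algebra all_field.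
Set Implicit Arguments. Unset Strict Implicit. Unset Printing Implicit Defensive.
Import Order.TTheory GRing.Theory Num.Theory.
Local Open Scope ring_scope.

(* F_25 = F_5(omega), omega^2 = 2; the pair (a, b) represents a + b*omega. *)
Definition F25 : finType := ('F_5 * 'F_5)%type.

Definition f25 (a b : nat) : F25 := (a%:R, b%:R).
Definition f25add (x y : F25) : F25 := (x.1 + y.1, x.2 + y.2).
Definition f25opp (x : F25) : F25 := (- x.1, - x.2).
Definition f25sub (x y : F25) : F25 := f25add x (f25opp y).
Definition f25zero : F25 := (0, 0).
(* (a + b w)(c + d w) = (ac + 2bd) + (ad + bc) w *)
Definition f25mul (x y : F25) : F25 :=
  (x.1 * y.1 + 2%:R * (x.2 * y.2), x.1 * y.2 + x.2 * y.1).

Definition sqF25 : {set F25} :=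
  [set s | (s != f25zero) && [exists t : F25, f25mul t t == s]].

(* A voltage assignment: a function on the nonzero squares (values elsewhere
   are irrelevant), not identically zero, with alpha(-s) = -alpha(s). *)
Definition voltage (l : nat) (a : F25 -> 'Z_l) : Prop :=
  (exists2 s, s \in sqF25 & a s != 0) /\
  (forall s, s \in sqF25 -> a (f25opp s) = - a s).

Definition extend_odd (l : nat) (vals : seq (F25 * nat)) (s : F25) : 'Z_l :=
  match [seq p <- vals | p.1 == s] with
  | p :: _ => (p.2)%:R
  | [::] =>
    match [seq p <- vals | p.1 == f25opp s] with
    | p :: _ => - (p.2)%:R
    | [::] => 0
    end
  end.

Definition alpha_vals : seq (F25 * nat) :=
  [:: (f25 1 0, 1%N); (f25 3 0, 1%N); (f25 1 1, 1%N);
      (f25 3 3, 0%N); (f25 1 4, 0%N); (f25 3 2, 0%N)].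
Definition beta_vals : seq (F25 * nat) :=
  [:: (f25 1 0, 0%N); (f25 3 0, 0%N); (f25 3 3, 0%N);
      (f25 1 1, 1%N); (f25 1 4, 1%N); (f25 3 2, 1%N)].

Definition alpha25 (l : nat) : F25 -> 'Z_l := extend_odd l alpha_vals.
Definition beta25 (l : nat) : F25 -> 'Z_l := extend_odd l beta_vals.

Definition cover_vertex (l : nat) : finType := (F25 * 'Z_l)%type.

Definition cover_adj (l : nat) (a : F25 -> 'Z_l) (u v : cover_vertex l) : bool :=
  (f25sub v.1 u.1 \in sqF25) && (v.2 - u.2 == a (f25sub v.1 u.1)).

Definition adj_matrix (l : nat) (a : F25 -> 'Z_l) : 'M[algC]_(#|cover_vertex l|) :=
  \matrix_(i, j) (cover_adj a (enum_val i) (enum_val j))%:R.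

Definition spec_mult (l : nat) (a : F25 -> 'Z_l) (lam : algC) : nat :=
  mup lam (char_poly (adj_matrix a)).

Definition same_spectrum (l : nat) (a b : F25 -> 'Z_l) : Prop :=
  forall lam : algC, spec_mult a lam = spec_mult b lam.

Definition graph_iso (l : nat) (a b : F25 -> 'Z_l) : Prop :=
  exists f : cover_vertex l -> cover_vertex l,
    bijective f /\ forall u v, cover_adj a u v = cover_adj b (f u) (f v).

(* Main.v *)
Require Import Defs.
From HB Require Import structures.
From mathcomp Require Import all_boot all_order all_algebra all_field.
From mathcomp Require Import ring.
Set Implicit Arguments. Unset Strict Implicit. Unset Printing Implicit Defensive.
Import Order.TTheory GRing.Theory Num.Theory.
Local Open Scope ring_scope.

Definition F25s : seq F25 := [seq f25 i j | i <- iota 0 5, j <- iota 0 5].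
Lemma uniq_F25s : uniq F25s. Proof. vm_compute. reflexivity. Qed.
Lemma F5_nat (c : 'F_5) : c = (val c)%:R.
Proof. by apply/val_inj; rewrite /= val_Fp_nat // modn_small. Qed.
Lemma mem_F25s (x : F25) : x \in F25s.
Proof.
case: x => a b; apply/allpairsP; exists (val a, val b).
split; rewrite ?mem_iota ?add0n //=; try exact: (ltn_ord _).
by rewrite /f25 -!F5_nat.
Qed.
Lemma allF25 (P : pred F25) : all P F25s -> forall x, P x.
Proof. by move/allP=> h x; apply: h; exact: mem_F25s. Qed.
Lemma big_foldr (R : nmodType) (s : seq F25) (F : F25 -> R) :
  \sum_(x <- s) F x = foldr (fun x a => F x + a) 0 s.
Proof. by elim: s => [|x s IH]; rewrite ?big_nil ?big_cons ?IH. Qed.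
Lemma sumF25 (R : nmodType) (F : F25 -> R) :
  \sum_(x : F25) F x = foldr (fun x a => F x + a) 0 F25s.
Proof.
rewrite -big_foldr; apply: perm_big; apply: uniq_perm.
- exact: index_enum_uniq.
- exact: uniq_F25s.
- by move=> x; rewrite mem_index_enum mem_F25s.
Qed.
Definition cntF (P : pred F25) : nat := count P F25s.
Lemma cardF25 (P : pred F25) : #|P| = cntF P.
Proof.
rewrite /cntF -sum1_card big_mkcond sumF25.
move: F25s => s; elim: s => [|x s IH] //=; rewrite IH; by case: (P x).
Qed.


Definition ext_int (vals : seq (F25 * nat)) (s : F25) : int :=
  match [seq p <- vals | p.1 == s] with
  | p :: _ => (p.2 : int)
  | [::] =>
    match [seq p <- vals | p.1 == f25opp s] with
    | p :: _ => - (p.2 : int)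
    | [::] => 0
    end
  end.

Lemma extend_oddE l vals s : extend_odd l vals s = (ext_int vals s)%:~R.
Proof.
rewrite /extend_odd /ext_int.
case: [seq _ <- _ | _] => [|p _]; last by rewrite pmulrn.
case: [seq _ <- _ | _] => [|p _]; last by rewrite mulrNz pmulrn.
by rewrite mulr0z.
Qed.

Definition ia := ext_int alpha_vals.
Definition ib := ext_int beta_vals.
Lemma alphaE l s : alpha25 l s = (ia s)%:~R. Proof. exact: extend_oddE. Qed.
Lemma betaE l s : beta25 l s = (ib s)%:~R. Proof. exact: extend_oddE. Qed.

Lemma ia_odd s : ia (f25opp s) = - ia s.
Proof.
apply/eqP; move: s; apply: allF25; vm_compute; reflexivity.
Qed.
Lemma ib_odd s : ib (f25opp s) = - ib s.
Proof.
apply/eqP; move: s; apply: allF25; vm_compute; reflexivity.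
Qed.

Lemma f25sub_addl (x t : F25) : f25sub (f25add x t) x = t.
Proof. case: x t => [a b] [c d]; rewrite /f25sub /f25add /f25opp /=; congr (_, _); ring. Qed.
Lemma f25sub_subr (x r : F25) : f25sub x (f25sub x r) = r.
Proof. case: x r => [a b] [c d]; rewrite /f25sub /f25add /f25opp /=; congr (_, _); ring. Qed.
Lemma f25add_sub (x y : F25) : f25add x (f25sub y x) = y.
Proof. case: x y => [a b] [c d]; rewrite /f25sub /f25add /f25opp /=; congr (_, _); ring. Qed.
Lemma f25_C4m (u v r t : F25) :
  f25sub (f25sub u r) (f25add v t) = f25opp (f25add (f25add r (f25sub v u)) t).
Proof. case: u v r t => [a b] [c d] [e f] [g h]; rewrite /f25sub /f25add /f25opp /=; congr (_, _); ring. Qed.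
Lemma f25add_inj (x t1 t2 : F25) : f25add x t1 = f25add x t2 -> t1 = t2.
Proof. by move=> h; rewrite -(f25sub_addl x t1) h f25sub_addl. Qed.
Lemma f25sub_inj (x t1 t2 : F25) : f25sub x t1 = f25sub x t2 -> t1 = t2.
Proof. by move=> h; rewrite -(f25sub_subr x t1) h f25sub_subr. Qed.
Lemma f25opp_sub (x y : F25) : f25opp (f25sub x y) = f25sub y x.
Proof. case: x y => [a b] [c d]; rewrite /f25sub /f25add /f25opp /=; congr (_, _); ring. Qed.
Lemma f25add_opp_sub (v u : F25) : f25add v (f25opp (f25sub v u)) = u.
Proof. case: u v => [a b] [c d]; rewrite /f25sub /f25add /f25opp /=; congr (_, _); ring. Qed.
Lemma f25sub_sub_eq (u v r : F25) : f25sub u r = v -> r = f25opp (f25sub v u).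
Proof. move<-; case: u r => [a b] [c d]; rewrite /f25sub /f25add /f25opp /=; congr (_, _); by rewrite addrAC subrr add0r opprK. Qed.
Lemma f25add_eq (v t u : F25) : f25add v t = u -> t = f25opp (f25sub v u).
Proof. move<-; case: v t => [a b] [c d]; rewrite /f25sub /f25add /f25opp /=; congr (_, _); ring. Qed.
Definition C4 l (a : F25 -> 'Z_l) (u v : cover_vertex l) :
  {set cover_vertex l * cover_vertex l} :=
  [set p | [&& cover_adj a v p.1, cover_adj a p.1 p.2, cover_adj a p.2 u,
               p.1 != u & p.2 != v]].

Definition Dset (ia0 : F25 -> int) (good : int -> bool) (s : F25) : {set F25 * F25} :=
  [set p | [&& p.1 \in sqF25, p.2 \in sqF25,
      f25opp (f25add (f25add p.2 s) p.1) \in sqF25,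
      good (- ia0 p.2 - ia0 s - ia0 p.1 - ia0 (f25opp (f25add (f25add p.2 s) p.1))),
      p.1 != f25opp s & p.2 != f25opp s]].

Definition goodZ l (n : int) : bool := ((n%:~R : 'Z_l) == 0).

Section C4card.
Variables (l : nat) (ia0 : F25 -> int) (a : F25 -> 'Z_l).
Hypothesis odd0 : forall s, ia0 (f25opp s) = - ia0 s.
Hypothesis aE : forall s, a s = (ia0 s)%:~R.

Lemma aodd s : a (f25opp s) = - a s.
Proof. by rewrite !aE odd0 mulrNz. Qed.

Lemma C4_card (u v : cover_vertex l) : cover_adj a u v ->
  #|C4 a u v| = #|Dset ia0 (goodZ l) (f25sub v.1 u.1)|.
Proof.
case/andP=> _ /eqP huv.
set s := f25sub v.1 u.1.
pose psi (q : F25 * F25) : cover_vertex l * cover_vertex l :=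
  ((f25add v.1 q.1, v.2 + a q.1), (f25sub u.1 q.2, u.2 - a q.2)).
have psi_inj : injective psi.
  move=> [t1 r1] [t2 r2] h.
  have h1 : f25add v.1 t1 = f25add v.1 t2 by move/(congr1 (fun p => p.1.1)): h.
  have h2 : f25sub u.1 r1 = f25sub u.1 r2 by move/(congr1 (fun p => p.2.1)): h.
  by rewrite (f25add_inj h1) (f25sub_inj h2).
have key q : (psi q \in C4 a u v) = (q \in Dset ia0 (goodZ l) s).
  case: q => t r; rewrite /C4 /Dset /cover_adj /=; move: sqF25 => S; rewrite !inE /=.
  rewrite f25sub_addl f25sub_subr f25_C4m -/s.
  have -> : v.2 + a t - v.2 == a t by rewrite addrC addKr.
  have -> : u.2 - (u.2 - a r) == a r by rewrite opprB addrC subrK.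
  rewrite andbT.
  have -> : (f25add v.1 t, v.2 + a t) != u = (t != f25opp s).
    apply/negbRL; rewrite negbK; apply/eqP/eqP.
    - by move=> h; exact: f25add_eq (congr1 fst h).
    - move=> ->; rewrite /s f25add_opp_sub aodd -huv.
      by rewrite opprB addrC subrK -surjective_pairing.
  have -> : (f25sub u.1 r, u.2 - a r) != v = (r != f25opp s).
    apply/negbRL; rewrite negbK; apply/eqP/eqP.
    - by move=> h; exact: f25sub_sub_eq (congr1 fst h).
    - move=> ->; rewrite /s.
      have -> : f25sub u.1 (f25opp (f25sub v.1 u.1)) = v.1.
        by case: (u.1) (v.1) => [a1 b1] [c1 d1]; rewrite /f25sub /f25add /f25opp /=; congr (_,_); ring.
      rewrite aodd -huv.
      by rewrite opprK addrC subrK -surjective_pairing.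
  set m := f25opp _.
  have -> : (u.2 - a r - (v.2 + a t) == a m) = goodZ l (- ia0 r - ia0 s - ia0 t - ia0 m).
    rewrite /goodZ !intrD !intrN -!aE -huv.
    apply/eqP/eqP => h.
    - by rewrite -h; ring.
    - by apply/eqP; rewrite -subr_eq0 -h; apply/eqP; ring.
  by case: (t \in S); case: (r \in S); case: (m \in S); rewrite /= ?andbF.
have -> : C4 a u v = psi @: Dset ia0 (goodZ l) s.
  apply/setP=> p; apply/idP/imsetP.
  - move=> hp; exists (f25sub p.1.1 v.1, f25sub u.1 p.2.1); last first.
      move: hp; rewrite inE => /and5P[/andP[_ /eqP h1] _ /andP[_ /eqP h3] _ _].
      rewrite /psi /= f25add_sub f25sub_subr -h1 -h3.
      case: p {h1 h3} => [[p11 p12] [p21 p22]] /=; congr ((_, _), (_, _)); ring.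
    rewrite -key.
    suff -> : psi (f25sub p.1.1 v.1, f25sub u.1 p.2.1) = p by [].
    move: hp; rewrite inE => /and5P[/andP[_ /eqP h1] _ /andP[_ /eqP h3] _ _].
    rewrite /psi /= f25add_sub f25sub_subr -h1 -h3.
    case: p {h1 h3} => [[p11 p12] [p21 p22]] /=; congr ((_, _), (_, _)); ring.
  - by case=> q hq ->; rewrite key.
by rewrite card_imset.
Qed.
End C4card.

Definition sqb (x : F25) : bool := (x != f25zero) && has (fun t => f25mul t t == x) F25s.
Lemma sqbE x : (x \in sqF25) = sqb x.
Proof.
rewrite inE /sqb; congr andb; apply/existsP/hasP => [[t h]|[t _ h]].
- by exists t => //; exact: mem_F25s.
- by exists t.
Qed.

Definition cnt2 (P : pred (F25 * F25)) : nat :=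
  foldr (fun t acc => (count (fun r => P (t, r)) F25s + acc)%N) 0%N F25s.

Lemma foldr_count (T : Type) (Q : pred T) (s : seq T) :
  foldr (fun x a => ((Q x : nat) + a)%N) 0%N s = count Q s.
Proof. by elim: s => //= x s ->. Qed.

Lemma big_F25s (R : nmodType) (F : F25 -> R) :
  \sum_(x : F25) F x = \sum_(x <- F25s) F x.
Proof. by rewrite sumF25 big_foldr. Qed.

Lemma sum2_cnt (s1 s2 : seq F25) (P : pred (F25 * F25)) :
  \sum_(t <- s1) \sum_(r <- s2) (if P (t, r) then 1 else 0)%N =
  foldr (fun t acc => (count (fun r => P (t, r)) s2 + acc)%N) 0%N s1.
Proof.
elim: s1 => [|t s IH]; first by rewrite big_nil.
rewrite big_cons IH /=; congr (_ + _)%N; clear IH.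
elim: s2 => [|r s' IH']; first by rewrite big_nil.
by rewrite big_cons IH' /=; case: (P (t, r)).
Qed.

Lemma cardF25x2 (P : pred (F25 * F25)) : #|P| = cnt2 P.
Proof.
rewrite -sum1_card big_mkcond /=.
have -> : \sum_(p : F25 * F25) (if p \in P then 1 else 0)%N =
   \sum_(t : F25) \sum_(r : F25) (if P (t, r) then 1 else 0)%N.
  by rewrite pair_bigA /=; apply: eq_bigr => -[t r].
rewrite big_F25s; under eq_bigr do rewrite big_F25s.
exact: sum2_cnt.
Qed.

Definition DP (ia0 : F25 -> int) (good : int -> bool) (s : F25) (p : F25 * F25) : bool :=
  [&& sqb p.1, sqb p.2,
      sqb (f25opp (f25add (f25add p.2 s) p.1)),
      good (- ia0 p.2 - ia0 s - ia0 p.1 - ia0 (f25opp (f25add (f25add p.2 s) p.1))),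
      p.1 != f25opp s & p.2 != f25opp s].

Lemma Dset_card ia0 good s : #|Dset ia0 good s| = cnt2 (DP ia0 good s).
Proof.
rewrite -cardF25x2; apply: eq_card => p.
by rewrite /Dset inE !sqbE.
Qed.

Definition eq0 (n : int) : bool := n == 0.

Definition C16A : seq F25 := [:: f25 1 0; f25 2 0; f25 3 0; f25 4 0].
Definition C16B : seq F25 := [:: f25 1 1; f25 4 4; f25 2 3; f25 3 2].


Definition code := (nat * nat)%type.
Definition enc (x : F25) : code := (val x.1, val x.2).
Definition cadd (a b : code) : code := ((a.1 + b.1) %% 5, (a.2 + b.2) %% 5)%N.
Definition copp (a : code) : code := ((5 - a.1) %% 5, (5 - a.2) %% 5)%N.
Definition codes : seq code := [seq (i, j) | i <- iota 0 5, j <- iota 0 5].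

Lemma enc_add x y : enc (f25add x y) = cadd (enc x) (enc y).
Proof. by case: x y => [a b] [c d]. Qed.
Lemma enc_opp x : enc (f25opp x) = copp (enc x).
Proof. by case: x => [a b]. Qed.
Lemma enc_inj : injective enc.
Proof. by move=> [a b] [c d] [/val_inj -> /val_inj ->]. Qed.
Lemma encF25s : map enc F25s = codes.
Proof. vm_compute. reflexivity. Qed.

Definition sqcodes : seq code := Eval vm_compute in [seq enc x | x <- F25s & sqb x].
Lemma sqbE' x : sqb x = (enc x \in sqcodes).
Proof. apply/eqP; move: x; apply: allF25; vm_compute; reflexivity. Qed.

Definition ctab (f : F25 -> int) : seq (code * int) := [seq (enc x, f x) | x <- F25s].
Definition iatab := Eval vm_compute in ctab ia.
Definition ibtab := Eval vm_compute in ctab ib.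
Definition look (t : seq (code * int)) (c : code) : int :=
  match [seq p <- t | p.1 == c] with p :: _ => p.2 | [::] => 0 end.
Lemma iaE' x : ia x = look iatab (enc x).
Proof. apply/eqP; move: x; apply: allF25; vm_compute; reflexivity. Qed.
Lemma ibE' x : ib x = look ibtab (enc x).
Proof. apply/eqP; move: x; apply: allF25; vm_compute; reflexivity. Qed.

Definition DPc (iat : seq (code * int)) (good : int -> bool) (s : code) (p : code * code) : bool :=
  let m := copp (cadd (cadd p.2 s) p.1) in
  [&& p.1 \in sqcodes, p.2 \in sqcodes, m \in sqcodes,
      good (- look iat p.2 - look iat s - look iat p.1 - look iat m),
      p.1 != copp s & p.2 != copp s].

Lemma DP_enc ia0 iat good s t r :
  (forall x, ia0 x = look iat (enc x)) ->
  DP ia0 good s (t, r) = DPc iat good (enc s) (enc t, enc r).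
Proof.
move=> hE; rewrite /DP /DPc /= !sqbE' !hE !enc_opp !enc_add.
by rewrite -!enc_opp !(inj_eq enc_inj).
Qed.

Definition cnt2c (P : pred (code * code)) : nat :=
  foldr (fun t acc => (count (fun r => P (t, r)) codes + acc)%N) 0%N codes.

Lemma foldr_eq (T R : Type) (f g : T -> R -> R) z s :
  (forall x a, f x a = g x a) -> foldr f z s = foldr g z s.
Proof. by move=> h; elim: s => //= x s ->. Qed.

Lemma cnt2_enc (P : pred (F25 * F25)) (Pc : pred (code * code)) :
  (forall t r, P (t, r) = Pc (enc t, enc r)) -> cnt2 P = cnt2c Pc.
Proof.
move=> hP; rewrite /cnt2 /cnt2c.
have h t : count (fun r => P (t, r)) F25s = count (fun r => Pc (enc t, r)) codes.
  by rewrite -encF25s count_map; apply: eq_count => r; rewrite /= hP.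
rewrite (@foldr_eq _ _ _ (fun t acc => (count (fun r => Pc (enc t, r)) codes + acc)%N));
  last by move=> t acc; rewrite h.
by rewrite -{3}encF25s foldr_map.
Qed.

Definition C16Ac : seq code := [seq enc x | x <- C16A].
Definition C16Bc : seq code := [seq enc x | x <- C16B].
Definition good3 (n : int) : bool := (absz n %% 3 == 0)%N.

Lemma countA_c : all (fun s => (s \notin sqcodes) || (s \in C16Ac) ||
                      (17 <= cnt2c (DPc iatab eq0 s))%N) codes.
Proof. Time vm_compute. reflexivity. Qed.
Lemma countB_c : all (fun s => (s \notin C16Bc) || (cnt2c (DPc ibtab eq0 s) <= 16)%N) codes.
Proof. Time vm_compute. reflexivity. Qed.
Lemma count3A_c : (24 <= cnt2c (DPc iatab good3 (enc (f25 1 1))))%N.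
Proof. Time vm_compute. reflexivity. Qed.
Lemma count3B_c : all (fun s => (s \notin sqcodes) || (cnt2c (DPc ibtab good3 s) <= 23)%N) codes.
Proof. Time vm_compute. reflexivity. Qed.

Definition goodN (l : nat) (n : int) : bool := (absz n %% l == 0)%N.

Lemma goodZN l n : (1 < l)%N -> goodZ l n = goodN l n.
Proof.
move=> hl; rewrite /goodZ /goodN; case: n => k.
- by rewrite -pmulrn -(inj_eq val_inj) /= val_Zp_nat.
- rewrite NegzE mulrNz -pmulrn oppr_eq0 -(inj_eq val_inj) /= val_Zp_nat //.
Qed.

Lemma Dset_good ia0 g1 g2 s : (forall n, g1 n = g2 n) -> Dset ia0 g1 s = Dset ia0 g2 s.
Proof. by move=> h; apply/setP => p; rewrite !inE h. Qed.

Lemma C4_transfer l (a b : F25 -> 'Z_l) (f : cover_vertex l -> cover_vertex l) :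
  injective f -> (forall u v, cover_adj a u v = cover_adj b (f u) (f v)) ->
  forall u v, (#|C4 a u v| <= #|C4 b (f u) (f v)|)%N.
Proof.
move=> finj hf u v.
have pinj : injective (fun p : cover_vertex l * cover_vertex l => (f p.1, f p.2)).
  by move=> [p1 p2] [q1 q2] [/finj -> /finj ->].
rewrite -(card_imset _ pinj); apply: subset_leq_card; apply/subsetP => p.
case/imsetP => q; rewrite !inE => hq ->.
by rewrite /= -!hf !(inj_eq finj).
Qed.

Lemma cardA l u v : (1 < l)%N -> cover_adj (alpha25 l) u v ->
  #|C4 (alpha25 l) u v| = cnt2c (DPc iatab (goodN l) (enc (f25sub v.1 u.1))).
Proof.
move=> hl huv; rewrite (C4_card ia_odd (@alphaE l) huv).
rewrite (Dset_good _ _ (fun n => goodZN n hl)) Dset_card.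
by apply: cnt2_enc => t r; apply: DP_enc; exact: iaE'.
Qed.

Lemma cardB l u v : (1 < l)%N -> cover_adj (beta25 l) u v ->
  #|C4 (beta25 l) u v| = cnt2c (DPc ibtab (goodN l) (enc (f25sub v.1 u.1))).
Proof.
move=> hl huv; rewrite (C4_card ib_odd (@betaE l) huv).
rewrite (Dset_good _ _ (fun n => goodZN n hl)) Dset_card.
by apply: cnt2_enc => t r; apply: DP_enc; exact: ibE'.
Qed.

Definition vals : seq int := [:: -1; 0; 1].
Lemma small4 : all (fun a : int => all (fun b : int => all (fun c : int => all (fun d : int =>
   (absz (- a - b - c - d)%R <= 4)%N) vals) vals) vals) vals.
Proof. by vm_compute. Qed.

Lemma look_vals t c : all (fun p => p.2 \in vals) t -> look t c \in vals.
Proof.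
move=> /allP ht; rewrite /look.
case E : [seq p <- t | p.1 == c] => [|p ps]; first by [].
have : p \in [seq p <- t | p.1 == c] by rewrite E mem_head.
by rewrite mem_filter => /andP[_ /ht].
Qed.
Lemma iatab_vals : all (fun p => p.2 \in vals) iatab. Proof. by vm_compute. Qed.
Lemma ibtab_vals : all (fun p => p.2 \in vals) ibtab. Proof. by vm_compute. Qed.

Lemma DPc_generic l iat s p : (4 < l)%N -> all (fun p => p.2 \in vals) iat ->
  DPc iat (goodN l) s p = DPc iat eq0 s p.
Proof.
move=> hl hv; rewrite /DPc; congr [&& _, _, _, _ & _].
set a := look iat p.2; set b := look iat s; set c := look iat p.1.
set d := look iat _.
have ha : a \in vals by exact: look_vals.
have hb : b \in vals by exact: look_vals.
have hc : c \in vals by exact: look_vals.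
have hd : d \in vals by exact: look_vals.
have hn : (absz (- a - b - c - d)%R <= 4)%N.
  move/allP: small4 => /(_ a ha) /allP /(_ b hb) /allP /(_ c hc) /allP /(_ d hd).
  done.
rewrite /goodN /eq0 modn_small -?absz_eq0 //.
by apply: leq_ltn_trans hl.
Qed.

Lemma cnt2c_eq (P Q : pred (code * code)) : (forall p, P p = Q p) -> cnt2c P = cnt2c Q.
Proof.
move=> h; rewrite /cnt2c; apply: foldr_eq => t acc; congr (_ + _)%N.
by apply: eq_count => r; rewrite h.
Qed.

Lemma sq_code s : s \in sqF25 -> enc s \in sqcodes.
Proof. by rewrite sqbE sqbE'. Qed.

Lemma C16A_snd s : s \in C16A -> s.2 = 0.
Proof. by rewrite !inE => /or4P[] /eqP ->. Qed.

Lemma adj_sq l (a : F25 -> 'Z_l) u v : cover_adj a u v -> f25sub v.1 u.1 \in sqF25.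
Proof. by case/andP. Qed.

Definition st1 l (p : cover_vertex l) : cover_vertex l := (f25add p.1 (f25 1 1), p.2 + 1).
Definition st2 l (p : cover_vertex l) : cover_vertex l := (f25add p.1 (f25 3 2), p.2 + 1).

Lemma st1_adj l p : cover_adj (beta25 l) p (st1 p) /\ f25sub (st1 p).1 p.1 \in C16B.
Proof.
rewrite /cover_adj /st1 /= f25sub_addl betaE; split; last by rewrite !inE eqxx.
apply/andP; split; first by rewrite sqbE; vm_compute.
have -> : ib (f25 1 1) = 1 by vm_compute.
by rewrite addrC addKr.
Qed.
Lemma st2_adj l p : cover_adj (beta25 l) p (st2 p) /\ f25sub (st2 p).1 p.1 \in C16B.
Proof.
rewrite /cover_adj /st2 /= f25sub_addl betaE; split; last by rewrite !inE eqxx !orbT.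
apply/andP; split; first by rewrite sqbE; vm_compute.
have -> : ib (f25 3 2) = 1 by vm_compute.
by rewrite addrC addKr.
Qed.

Definition iterF (n : nat) (d y : F25) : F25 := iter n (fun z => f25add z d) y.

Lemma iter_st1 l n (p : cover_vertex l) : iter n (@st1 l) p = (iterF n (f25 1 1) p.1, p.2 + n%:R).
Proof.
elim: n => [|n IH] /=; first by rewrite addr0 -surjective_pairing.
by rewrite IH /st1 /= -addrA natr1.
Qed.

Lemma iter_st2 l n (p : cover_vertex l) : iter n (@st2 l) p = (iterF n (f25 3 2) p.1, p.2 + n%:R).
Proof.
elim: n => [|n IH] /=; first by rewrite addr0 -surjective_pairing.
by rewrite IH /st2 /= -addrA natr1.
Qed.

Lemma f25addA x y z : f25add (f25add x y) z = f25add x (f25add y z).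
Proof. by case: x y z => [a b] [c d] [e f]; rewrite /f25add /= !addrA. Qed.

Lemma iterF_shift n d y w : iterF n d (f25add y w) = f25add y (iterF n d w).
Proof. by elim: n => //= n IH; rewrite IH f25addA. Qed.

Lemma iterF5 d y : iterF 5 d y = y.
Proof.
have h : all (fun d => all (fun y => iterF 5 d y == y) F25s) F25s by vm_compute.
by apply/eqP; move: y; apply: allF25; move: d; apply: allF25.
Qed.

Lemma iterF_mul5 k d y : iterF (5 * k) d y = y.
Proof.
elim: k => [|k IH]; first by rewrite muln0.
by rewrite mulnS /iterF iterD -/(iterF (5 * k) d y) IH -/(iterF 5 d y) iterF5.
Qed.

Definition nmlist : seq (nat * nat) := [seq (i, j) | i <- iota 0 5, j <- iota 0 5].
Lemma decomp_b : all (fun x => has (fun nm => iterF nm.1 (f25 1 1) (iterF nm.2 (f25 3 2) f25zero) == x) nmlist) F25s.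
Proof. by vm_compute. Qed.

Lemma f25add0 y : f25add y f25zero = y.
Proof. by case: y => a b; rewrite /f25add /= !addr0. Qed.

Lemma reach l (pl : prime l) (l5 : l != 5%N) (p q : cover_vertex l) :
  exists n m, iter n (@st1 l) (iter m (@st2 l) p) = q.
Proof.
have l1 : (1 < l)%N by apply: prime_gt1.
have u5 : (5%:R : 'Z_l) \is a GRing.unit.
  rewrite unitZpE // prime_coprime // dvdn_prime2 //.
have [[n0 m0] _ /eqP hx] : exists2 nm, nm \in nmlist &
    iterF nm.1 (f25 1 1) (iterF nm.2 (f25 3 2) f25zero) == f25sub q.1 p.1.
  by apply/hasP; move/allP: decomp_b; apply; exact: mem_F25s.
have [z hz] : exists z : 'Z_l, 5%:R * z = q.2 - p.2 - (m0 + n0)%:R.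
  by exists ((q.2 - p.2 - (m0 + n0)%:R) / 5%:R); rewrite mulrC divrK.
exists (n0 + 5 * nat_of_ord z)%N, m0.
rewrite iter_st2 iter_st1 /= [RHS]surjective_pairing; congr (_, _).
- rewrite -[p.1]f25add0 iterF_shift /iterF iterD -/(iterF (5 * nat_of_ord z) _ _) iterF_mul5.
  rewrite -/(iterF n0 _ _) iterF_shift -/(iterF n0 _ _) /= in hx *.
  by rewrite hx f25add_sub.
- rewrite natrD natrM natr_Zp hz natrD; ring.
Qed.

Lemma mem_codes x : enc x \in codes.
Proof. by rewrite -encF25s map_f // mem_F25s. Qed.

Lemma noniso_gen l : prime l -> l != 5%N -> (4 < l)%N -> ~ graph_iso (alpha25 l) (beta25 l).
Proof.
move=> pl l5 l4 [f [[g fg gf] hf]].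
have l1 : (1 < l)%N by apply: prime_gt1.
have finj : injective f := can_inj fg.
have key p q : cover_adj (beta25 l) p q -> f25sub q.1 p.1 \in C16B ->
    ((g q).1).2 = ((g p).1).2.
  move=> hpq hB.
  have huv : cover_adj (alpha25 l) (g p) (g q) by rewrite hf !gf.
  set s := f25sub (g q).1 (g p).1.
  have sA : s \in sqF25 := adj_sq huv.
  case: (boolP (s \in C16A)) => [/C16A_snd hs|hnA].
    apply/eqP; rewrite -subr_eq0; apply/eqP; move: hs.
    by rewrite /s /f25sub /f25add /f25opp /=.
  exfalso.
  have h1 : (17 <= #|C4 (alpha25 l) (g p) (g q)|)%N.
    rewrite cardA // (cnt2c_eq (fun pp => @DPc_generic l iatab (enc s) pp l4 iatab_vals)).
    move/allP: countA_c => /(_ (enc s) (mem_codes s)).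
    by rewrite sq_code // (mem_map enc_inj) (negbTE hnA).
  have h2 : (#|C4 (beta25 l) p q| <= 16)%N.
    rewrite cardB // (cnt2c_eq (fun pp => @DPc_generic l ibtab _ pp l4 ibtab_vals)).
    move/allP: countB_c => /(_ _ (mem_codes (f25sub q.1 p.1))).
    by rewrite (mem_map enc_inj) hB.
  have := C4_transfer finj hf (g p) (g q); rewrite !gf => h3.
  by move: (leq_trans h1 (leq_trans h3 h2)).
have inv1 p : ((g (st1 p)).1).2 = ((g p).1).2.
  by case: (st1_adj p) => h1 h2; exact: key.
have inv2 p : ((g (st2 p)).1).2 = ((g p).1).2.
  by case: (st2_adj p) => h1 h2; exact: key.
have invI n m p : ((g (iter n (@st1 l) (iter m (@st2 l) p))).1).2 = ((g p).1).2.
  elim: n => [|n IH] /=; last by rewrite inv1 IH.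
  by elim: m => [|m IH] //=; rewrite inv2 IH.
pose u0 : cover_vertex l := (f25 0 0, 0).
pose u1 : cover_vertex l := (f25 0 1, 0).
have [n [m h]] := reach pl l5 (f u0) (f u1).
have := invI n m (f u0); rewrite h !fg /=.
by move/eqP; vm_compute.
Qed.

Lemma noniso3 : ~ graph_iso (alpha25 3) (beta25 3).
Proof.
move=> [f [[g fg gf] hf]].
have finj : injective f := can_inj fg.
pose u0 : cover_vertex 3 := (f25 0 0, 0).
pose v0 : cover_vertex 3 := (f25 1 1, 1).
have huv : cover_adj (alpha25 3) u0 v0.
  by rewrite /cover_adj sqbE alphaE; vm_compute.
have h1 : (24 <= #|C4 (alpha25 3) u0 v0|)%N.
  rewrite cardA //.
have hadjB : cover_adj (beta25 3) (f u0) (f v0) by rewrite -hf.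
have h2 : (#|C4 (beta25 3) (f u0) (f v0)| <= 23)%N.
  rewrite cardB //.
  move/allP: count3B_c => /(_ _ (mem_codes (f25sub (f v0).1 (f u0).1))).
  by rewrite sq_code ?(adj_sq hadjB).
have h3 := C4_transfer finj hf u0 v0.
by move: (leq_trans h1 (leq_trans h3 h2)).
Qed.

Definition Mrows : seq (seq int) :=
  [:: [:: 0; 0; 0; 0; 0; 1; 3; 1; 0; 0; (-1); 1; 0; 1; (-1); 1; 1; (-1); 0; (-1); (-1); 0; 0; (-1); 2];
   [:: 0; 0; 0; 0; 0; 1; 0; 0; 1; 3; 0; 1; (-1); (-1); 1; (-1); 0; (-1); 1; 1; 0; (-1); 2; (-1); 0];
   [:: 0; 0; 0; 0; 0; 0; 1; 3; 1; 0; (-1); (-1); 1; 0; 1; (-1); 1; 1; (-1); 0; 2; (-1); 0; 0; (-1)];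
   [:: 0; 0; 0; 0; 0; 3; 1; 0; 0; 1; 1; 0; 1; (-1); (-1); 1; (-1); 0; (-1); 1; 0; 0; (-1); 2; (-1)];
   [:: 0; 0; 0; 0; 0; 0; 0; 1; 3; 1; 1; (-1); (-1); 1; 0; 0; (-1); 1; 1; (-1); (-1); 2; (-1); 0; 0];
   [:: 0; 0; 0; 0; 0; (-1); (-1); 1; 0; 1; 0; 1; 1; 0; 3; 2; 0; (-1); (-1); 0; (-1); 0; (-1); 1; 1];
   [:: 0; 0; 0; 0; 0; 1; 0; 1; (-1); (-1); 1; 0; 3; 0; 1; (-1); (-1); 0; 2; 0; (-1); 1; 1; (-1); 0];
   [:: 0; 0; 0; 0; 0; 1; (-1); (-1); 1; 0; 3; 0; 1; 1; 0; 0; 2; 0; (-1); (-1); 1; (-1); 0; (-1); 1];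
   [:: 0; 0; 0; 0; 0; (-1); 1; 0; 1; (-1); 1; 1; 0; 3; 0; 0; (-1); (-1); 0; 2; 0; (-1); 1; 1; (-1)];
   [:: 0; 0; 0; 0; 0; 0; 1; (-1); (-1); 1; 0; 3; 0; 1; 1; (-1); 0; 2; 0; (-1); 1; 1; (-1); 0; (-1)];
   [:: 0; 0; 0; 0; 0; 0; (-1); 1; 1; (-1); 0; 2; 0; (-1); (-1); 1; 0; 3; 0; 1; (-1); (-1); 1; 0; 1];
   [:: 0; 0; 0; 0; 0; 1; 1; (-1); 0; (-1); 0; (-1); (-1); 0; 2; 3; 0; 1; 1; 0; 1; 0; 1; (-1); (-1)];
   [:: 0; 0; 0; 0; 0; (-1); 0; (-1); 1; 1; (-1); 0; 2; 0; (-1); 1; 1; 0; 3; 0; 1; (-1); (-1); 1; 0];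
   [:: 0; 0; 0; 0; 0; (-1); 1; 1; (-1); 0; 2; 0; (-1); (-1); 0; 0; 3; 0; 1; 1; (-1); 1; 0; 1; (-1)];
   [:: 0; 0; 0; 0; 0; 1; (-1); 0; (-1); 1; (-1); (-1); 0; 2; 0; 0; 1; 1; 0; 3; 0; 1; (-1); (-1); 1];
   [:: 0; 0; 0; 0; 0; 0; (-1); 2; (-1); 0; 1; 1; (-1); 0; (-1); 1; (-1); (-1); 1; 0; 3; 1; 0; 0; 1];
   [:: 0; 0; 0; 0; 0; 2; (-1); 0; 0; (-1); (-1); 0; (-1); 1; 1; (-1); 1; 0; 1; (-1); 0; 0; 1; 3; 1];
   [:: 0; 0; 0; 0; 0; 0; 0; (-1); 2; (-1); (-1); 1; 1; (-1); 0; 0; 1; (-1); (-1); 1; 1; 3; 1; 0; 0];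
   [:: 0; 0; 0; 0; 0; (-1); 2; (-1); 0; 0; 1; (-1); 0; (-1); 1; (-1); (-1); 1; 0; 1; 1; 0; 0; 1; 3];
   [:: 0; 0; 0; 0; 0; (-1); 0; 0; (-1); 2; 0; (-1); 1; 1; (-1); 1; 0; 1; (-1); (-1); 0; 1; 3; 1; 0];
   [:: 0; 0; 0; 5; 0; 0; 0; 0; 0; 0; 0; 0; 0; 0; 0; 0; 0; 0; 0; 0; 0; 0; 0; 0; 0];
   [:: 0; 5; 0; 0; 0; 0; 0; 0; 0; 0; 0; 0; 0; 0; 0; 0; 0; 0; 0; 0; 0; 0; 0; 0; 0];
   [:: 0; 0; 0; 0; 5; 0; 0; 0; 0; 0; 0; 0; 0; 0; 0; 0; 0; 0; 0; 0; 0; 0; 0; 0; 0];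
   [:: 0; 0; 5; 0; 0; 0; 0; 0; 0; 0; 0; 0; 0; 0; 0; 0; 0; 0; 0; 0; 0; 0; 0; 0; 0];
   [:: 5; 0; 0; 0; 0; 0; 0; 0; 0; 0; 0; 0; 0; 0; 0; 0; 0; 0; 0; 0; 0; 0; 0; 0; 0]].
Definition Nrows : seq (seq int) :=
  [:: [:: 0; 0; 0; 0; 0; 0; 0; 0; 0; 0; 0; 0; 0; 0; 0; 0; 0; 0; 0; 0; 0; 0; 0; 0; 5];
   [:: 0; 0; 0; 0; 0; 0; 0; 0; 0; 0; 0; 0; 0; 0; 0; 0; 0; 0; 0; 0; 0; 5; 0; 0; 0];
   [:: 0; 0; 0; 0; 0; 0; 0; 0; 0; 0; 0; 0; 0; 0; 0; 0; 0; 0; 0; 0; 0; 0; 0; 5; 0];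
   [:: 0; 0; 0; 0; 0; 0; 0; 0; 0; 0; 0; 0; 0; 0; 0; 0; 0; 0; 0; 0; 5; 0; 0; 0; 0];
   [:: 0; 0; 0; 0; 0; 0; 0; 0; 0; 0; 0; 0; 0; 0; 0; 0; 0; 0; 0; 0; 0; 0; 5; 0; 0];
   [:: 1; 1; 0; 3; 0; (-1); 1; 1; (-1); 0; 0; 1; (-1); (-1); 1; 0; 2; 0; (-1); (-1); 0; 0; 0; 0; 0];
   [:: 3; 0; 1; 1; 0; (-1); 0; (-1); 1; 1; (-1); 1; 0; 1; (-1); (-1); (-1); 0; 2; 0; 0; 0; 0; 0; 0];
   [:: 1; 0; 3; 0; 1; 1; 1; (-1); 0; (-1); 1; (-1); (-1); 1; 0; 2; 0; (-1); (-1); 0; 0; 0; 0; 0; 0];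
   [:: 0; 1; 1; 0; 3; 0; (-1); 1; 1; (-1); 1; 0; 1; (-1); (-1); (-1); 0; 2; 0; (-1); 0; 0; 0; 0; 0];
   [:: 0; 3; 0; 1; 1; 1; (-1); 0; (-1); 1; (-1); (-1); 1; 0; 1; 0; (-1); (-1); 0; 2; 0; 0; 0; 0; 0];
   [:: (-1); 0; (-1); 1; 1; 0; 1; 3; 1; 0; 0; 0; (-1); 2; (-1); 1; (-1); (-1); 1; 0; 0; 0; 0; 0; 0];
   [:: 1; 1; (-1); 0; (-1); 1; 0; 0; 1; 3; 2; (-1); 0; 0; (-1); 1; 0; 1; (-1); (-1); 0; 0; 0; 0; 0];
   [:: 0; (-1); 1; 1; (-1); 1; 3; 1; 0; 0; 0; (-1); 2; (-1); 0; (-1); (-1); 1; 0; 1; 0; 0; 0; 0; 0];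
   [:: 1; (-1); 0; (-1); 1; 0; 0; 1; 3; 1; (-1); 0; 0; (-1); 2; 0; 1; (-1); (-1); 1; 0; 0; 0; 0; 0];
   [:: (-1); 1; 1; (-1); 0; 3; 1; 0; 0; 1; (-1); 2; (-1); 0; 0; (-1); 1; 0; 1; (-1); 0; 0; 0; 0; 0];
   [:: 1; (-1); (-1); 1; 0; 2; (-1); 0; 0; (-1); 1; 3; 1; 0; 0; 1; (-1); 0; (-1); 1; 0; 0; 0; 0; 0];
   [:: 1; 0; 1; (-1); (-1); 0; (-1); 2; (-1); 0; 0; 0; 1; 3; 1; (-1); 1; 1; (-1); 0; 0; 0; 0; 0; 0];
   [:: (-1); (-1); 1; 0; 1; (-1); 0; 0; (-1); 2; 3; 1; 0; 0; 1; (-1); 0; (-1); 1; 1; 0; 0; 0; 0; 0];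
   [:: 0; 1; (-1); (-1); 1; (-1); 2; (-1); 0; 0; 0; 1; 3; 1; 0; 1; 1; (-1); 0; (-1); 0; 0; 0; 0; 0];
   [:: (-1); 1; 0; 1; (-1); 0; 0; (-1); 2; (-1); 1; 0; 0; 1; 3; 0; (-1); 1; 1; (-1); 0; 0; 0; 0; 0];
   [:: (-1); 0; 2; 0; (-1); (-1); (-1); 1; 0; 1; (-1); 1; 1; (-1); 0; 3; 0; 1; 1; 0; 0; 0; 0; 0; 0];
   [:: 0; (-1); (-1); 0; 2; 0; 1; (-1); (-1); 1; (-1); 0; (-1); 1; 1; 1; 0; 3; 0; 1; 0; 0; 0; 0; 0];
   [:: 0; 2; 0; (-1); (-1); (-1); 1; 0; 1; (-1); 1; 1; (-1); 0; (-1); 0; 1; 1; 0; 3; 0; 0; 0; 0; 0];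
   [:: (-1); (-1); 0; 2; 0; 1; (-1); (-1); 1; 0; 0; (-1); 1; 1; (-1); 0; 3; 0; 1; 1; 0; 0; 0; 0; 0];
   [:: 2; 0; (-1); (-1); 0; 1; 0; 1; (-1); (-1); 1; (-1); 0; (-1); 1; 1; 1; 0; 3; 0; 0; 0; 0; 0; 0]].

Definition cidx (c : code) : nat := (c.1 * 5 + c.2)%N.
Definition mc (c1 c2 : code) : int := nth 0 (nth [::] Mrows (cidx c1)) (cidx c2).
Definition nc (c1 c2 : code) : int := nth 0 (nth [::] Nrows (cidx c1)) (cidx c2).
Definition csub (a b : code) : code := cadd a (copp b).
Definition sumc (F : code -> int) : int := foldr (fun x acc => F x + acc) 0 codes.

Lemma inter_c : all (fun u1 => all (fun w1 => all (fun k : int =>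
   sumc (fun x => mc u1 x * ((csub w1 x \in sqcodes) && (look iatab (csub w1 x) == k) : int)) ==
   sumc (fun x => ((csub x u1 \in sqcodes) && (look ibtab (csub x u1) == k) : int) * mc x w1))
   vals) codes) codes.
Proof. Time vm_compute. reflexivity. Qed.

Lemma inv_c : all (fun u1 => all (fun w1 =>
   sumc (fun x => nc u1 x * mc x w1) == (if u1 == w1 then 25 else 0)) codes) codes.
Proof. Time vm_compute. reflexivity. Qed.

Lemma enc_sub x y : enc (f25sub x y) = csub (enc x) (enc y).
Proof. by rewrite /f25sub enc_add enc_opp. Qed.

Lemma sum_enc (F : F25 -> int) (Fc : code -> int) :
  (forall x, F x = Fc (enc x)) -> \sum_(x : F25) F x = sumc Fc.
Proof.
move=> h; rewrite sumF25 /sumc -encF25s.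
by elim: F25s => //= x s ->; rewrite h.
Qed.

Definition mtab (x y : F25) : int := mc (enc x) (enc y).
Definition ntab (x y : F25) : int := nc (enc x) (enc y).

Lemma inter_int u1 w1 k : k \in vals ->
  \sum_(x : F25) mtab u1 x * ((sqb (f25sub w1 x)) && (ia (f25sub w1 x) == k) : int) =
  \sum_(x : F25) ((sqb (f25sub x u1)) && (ib (f25sub x u1) == k) : int) * mtab x w1.
Proof.
move=> hk.
rewrite (@sum_enc _ (fun x => mc (enc u1) x * ((csub (enc w1) x \in sqcodes) &&
           (look iatab (csub (enc w1) x) == k) : int))); last first.
  by move=> x; rewrite /mtab sqbE' iaE' enc_sub.
rewrite (@sum_enc _ (fun x => ((csub x (enc u1) \in sqcodes) &&
           (look ibtab (csub x (enc u1)) == k) : int) * mc x (enc w1))); last first.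
  by move=> x; rewrite /mtab sqbE' ibE' enc_sub.
apply/eqP.
move/allP: inter_c => /(_ _ (mem_codes u1)) /allP /(_ _ (mem_codes w1)) /allP /(_ _ hk).
done.
Qed.

Lemma inv_int u1 w1 : \sum_(x : F25) ntab u1 x * mtab x w1 = if u1 == w1 then 25 else 0.
Proof.
rewrite (@sum_enc _ (fun x => nc (enc u1) x * mc x (enc w1))) //.
move/allP: inv_c => /(_ _ (mem_codes u1)) /allP /(_ _ (mem_codes w1)) /eqP ->.
by rewrite (inj_eq enc_inj).
Qed.

Lemma char_poly_sim n (M A B : 'M[algC]_n) :
  \det M != 0 -> M *m A = B *m M -> char_poly A = char_poly B.
Proof.
move=> dM hMA.
set P := map_mx polyC M.
have hP : P *m char_poly_mx A = char_poly_mx B *m P.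
  rewrite /char_poly_mx mulmxBr mulmxBl -scalar_mxC; congr (_ - _).
  by rewrite /P -!map_mxM hMA.
have := congr1 determinant hP; rewrite !det_mulmx /P det_map_mx.
rewrite [_ * polyC _]mulrC => /mulfI; apply.
by rewrite polyC_eq0.
Qed.

Section Spec.
Variable l : nat.
Local Notation V := (cover_vertex l).
Local Notation n := #|cover_vertex l|.

Definition matV (F : V -> V -> algC) : 'M[algC]_n :=
  \matrix_(i, j) F (enum_val i) (enum_val j).

Lemma sumV (G : V -> algC) : \sum_(k < n) G (enum_val k) = \sum_(v : V) G v.
Proof. by rewrite -(big_enum_val G). Qed.

Lemma matV_mul F G : matV F *m matV G = matV (fun u w => \sum_(v : V) F u v * G v w).
Proof.
apply/matrixP => i j; rewrite !mxE -sumV; apply: eq_bigr => k _; by rewrite !mxE.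
Qed.

Lemma adj_matV a : adj_matrix a = matV (fun u v => (cover_adj a u v)%:R).
Proof. by apply/matrixP => i j; rewrite !mxE. Qed.

Lemma sum_pairV (G : V -> algC) : \sum_(v : V) G v = \sum_(x : F25) \sum_(i : 'Z_l) G (x, i).
Proof. by rewrite pair_bigA /=; apply: eq_bigr => -[x i]. Qed.

Lemma sum_delta (G : 'Z_l -> algC) a : \sum_(i : 'Z_l) (a == i)%:R * G i = G a.
Proof.
rewrite (bigD1 a) //= eqxx mul1r big1 ?addr0 // => i.
by rewrite eq_sym => /negbTE ->; rewrite mul0r.
Qed.
End Spec.

Lemma ia_vals y : ia y \in vals.
Proof. move: y; apply: allF25; by vm_compute. Qed.
Lemma ib_vals y : ib y \in vals.
Proof. move: y; apply: allF25; by vm_compute. Qed.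

Lemma split_k l (ia0 : F25 -> int) (d : 'Z_l) y : ia0 y \in vals ->
  ((sqb y && (d == (ia0 y)%:~R))%:R : algC) =
  \sum_(k <- vals) (d == k%:~R)%:R * (sqb y && (ia0 y == k))%:R.
Proof.
rewrite !big_cons big_nil !inE => /or3P[] /eqP ->; case: (sqb y) => /=;
  by rewrite ?mulr0 ?mulr1 ?addr0 ?add0r.
Qed.

Lemma bool_intr (b : bool) : (((b : int))%:~R : algC) = b%:R.
Proof. by case: b. Qed.

Lemma intr_sum_bool (F : F25 -> int) (G : F25 -> algC) :
  (forall x, G x = (F x)%:~R) -> \sum_(x : F25) G x = (\sum_(x : F25) F x)%:~R.
Proof. by move=> h; rewrite mulrz_sumr; apply: eq_bigr => x _; rewrite h. Qed.

Section Entry.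
Variable l : nat.
Local Notation V := (cover_vertex l).
Definition Mf (u v : V) : algC := (u.2 == v.2)%:R * (mtab u.1 v.1)%:~R.
Definition Nf (u v : V) : algC := (u.2 == v.2)%:R * (ntab u.1 v.1)%:~R.

Lemma entry_eq (u w : V) :
  \sum_(v : V) Mf u v * (cover_adj (alpha25 l) v w)%:R =
  \sum_(v : V) (cover_adj (beta25 l) u v)%:R * Mf v w.
Proof.
rewrite !sum_pairV.
have L x : \sum_(i : 'Z_l) Mf u (x, i) * (cover_adj (alpha25 l) (x, i) w)%:R =
           (mtab u.1 x)%:~R * (cover_adj (alpha25 l) (x, u.2) w)%:R.
  rewrite -(sum_delta (fun i => (mtab u.1 x)%:~R * (cover_adj (alpha25 l) (x, i) w)%:R) u.2).
  by apply: eq_bigr => i _; rewrite /Mf /= mulrA.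
have R x : \sum_(i : 'Z_l) (cover_adj (beta25 l) u (x, i))%:R * Mf (x, i) w =
           (cover_adj (beta25 l) u (x, w.2))%:R * (mtab x w.1)%:~R.
  rewrite -(sum_delta (fun i => (cover_adj (beta25 l) u (x, i))%:R * (mtab x w.1)%:~R) w.2).
  by apply: eq_bigr => i _; rewrite /Mf /= eq_sym mulrCA.
rewrite (eq_bigr _ (fun x _ => L x)) (eq_bigr _ (fun x _ => R x)) {L R}.
rewrite /cover_adj /=.
set d := w.2 - u.2.
have eL x : ((f25sub w.1 x \in sqF25) && (d == alpha25 l (f25sub w.1 x)))%:R =
   \sum_(k <- vals) (d == k%:~R)%:R * (sqb (f25sub w.1 x) && (ia (f25sub w.1 x) == k))%:R :> algC.
  by rewrite sqbE alphaE; apply: split_k; exact: ia_vals.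
have eR x : ((f25sub x u.1 \in sqF25) && (d == beta25 l (f25sub x u.1)))%:R =
   \sum_(k <- vals) (d == k%:~R)%:R * (sqb (f25sub x u.1) && (ib (f25sub x u.1) == k))%:R :> algC.
  by rewrite sqbE betaE; apply: split_k; exact: ib_vals.
under eq_bigr do rewrite eL mulr_sumr.
under [in RHS]eq_bigr do rewrite eR mulr_suml.
rewrite exchange_big [in RHS]exchange_big /=.
apply: eq_big_seq => k hk.
under eq_bigr do rewrite mulrCA.
under [in RHS]eq_bigr do rewrite -mulrA.
rewrite -mulr_sumr -mulr_sumr; congr (_ * _).
rewrite (@intr_sum_bool (fun x => mtab u.1 x * ((sqb (f25sub w.1 x)) && (ia (f25sub w.1 x) == k) : int))); last first.
  by move=> x; rewrite intrM bool_intr.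
rewrite (@intr_sum_bool (fun x => ((sqb (f25sub x u.1)) && (ib (f25sub x u.1) == k) : int) * mtab x w.1)); last first.
  by move=> x; rewrite intrM bool_intr.
by rewrite inter_int.
Qed.
End Entry.

Lemma spec_same l : same_spectrum (alpha25 l) (beta25 l).
Proof.
pose Mb := matV (@Mf l); pose Nb := matV (@Nf l).
have hMA : Mb *m adj_matrix (alpha25 l) = adj_matrix (beta25 l) *m Mb.
  rewrite !adj_matV /Mb !matV_mul; apply/matrixP => i j; rewrite !mxE.
  exact: entry_eq.
have hNM : Nb *m Mb = (25%:R : algC)%:M.
  rewrite /Nb /Mb matV_mul; apply/matrixP => i j; rewrite !mxE.
  set u := enum_val i; set w := enum_val j.
  rewrite sum_pairV.
  have E x : \sum_(k : 'Z_l) Nf u (x, k) * Mf (x, k) w =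
             (u.2 == w.2)%:R * ((ntab u.1 x * mtab x w.1)%:~R).
    rewrite -(sum_delta (fun k => (k == w.2)%:R * ((ntab u.1 x * mtab x w.1)%:~R)) u.2).
    apply: eq_bigr => k _; rewrite /Nf /Mf /= intrM.
    ring.
  rewrite (eq_bigr _ (fun x _ => E x)) -mulr_sumr -mulrz_sumr inv_int.
  rewrite -(inj_eq enum_val_inj) -/u -/w [u]surjective_pairing [w]surjective_pairing xpair_eqE.
  case: (u.1 == w.1); case: (u.2 == w.2) => /=; by rewrite ?mul1r ?mul0r ?mulr0z ?mulr1n.
have dM : \det Mb != 0.
  apply/negP => /eqP h0.
  have := congr1 determinant hNM; rewrite det_mulmx h0 mulr0 det_scalar => /esym /eqP.
  by rewrite expf_eq0 pnatr_eq0 andbF.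
move=> lam; rewrite /spec_mult.
by rewrite (char_poly_sim dM hMA).
Qed.

Lemma voltA l : voltage (alpha25 l).
Proof.
split.
- exists (f25 1 0); first by rewrite sqbE; vm_compute.
  rewrite alphaE; have -> : ia (f25 1 0) = 1 by vm_compute.
  by rewrite mulr1z oner_neq0.
- by move=> s _; rewrite !alphaE ia_odd mulrNz.
Qed.

Lemma voltB l : voltage (beta25 l).
Proof.
split.
- exists (f25 1 1); first by rewrite sqbE; vm_compute.
  rewrite betaE; have -> : ib (f25 1 1) = 1 by vm_compute.
  by rewrite mulr1z oner_neq0.
- by move=> s _; rewrite !betaE ib_odd mulrNz.
Qed.

Theorem mainTheorem8 (l : nat) (hl : prime l) (hodd : odd l) (h5 : l != 5%N) :
  voltage (alpha25 l) /\ voltage (beta25 l) /\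
  same_spectrum (alpha25 l) (beta25 l) /\
  ~ graph_iso (alpha25 l) (beta25 l).
Proof.
split; first exact: voltA.
split; first exact: voltB.
split; first exact: spec_same.
case: (ltnP 4 l) => [l4 | l4]; first exact: noniso_gen.
move: hl hodd h5 l4; case: l => [|[|[|[|[|l]]]]] //= _ _ _ _.
exact: noniso3.
Qed.
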